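(* Let $H=(V,E)$ be a path hypergraph with exactly three edges $e_1,e_2,e_3$ (in path order), where the middle edge satisfies $|e_2|=2$ and $|V|\equiv 0\pmod 4$. Then $H$ is not $\mathbb{Z}_2\times\mathbb{Z}_2$-cordial.
   Context: A path hypergraph with edges $e_1,\dots,e_m$ (in this order) is a finite hypergraph $H=(V,E)$ with $E=\{e_1,\dots,e_m\}$, each edge having at least two vertices, $V=e_1\cup\cdots\cup e_m$, $|e_i\cap e_{i+1}|=1$ for $1\le i<m$, and $e_i\cap e_j=\emptyset$ whenever $|i-j|\ge 2$. Let $A=\mathbb{Z}_2\times\mathbb{Z}_2$. For a labeling $c:V\to A$, write $v_c(a)=|c^{-1}(a)|$; $c$ is $A$-friendly if $|v_c(a)-v_c(b)|\le 1$ for all $a,b\in A$. It induces $c^*:E\to A$, $c^*(e)=\sum_{v\in e}c(v)$; write $e_{c^*}(a)=|(c^* )^{-1}(a)|$. $H$ is $A$-cordial if it admits an $A$-friendly labeling $c$ with $|e_{c^*}(a)-e_{c^*}(b)|\le 1$ for all $a,b\in A$. *)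

(* Defs.v *)
From HB Require Import structures.
From mathcomp Require Import all_boot all_order all_algebra.
Set Implicit Arguments. Unset Strict Implicit. Unset Printing Implicit Defensive.
Import GRing.Theory.

Definition A : zmodType := ('Z_2 * 'Z_2)%type.

(* A path hypergraph on vertex set V with edges es = [:: e_1; ...; e_m]
   (in this order). Edges are pairwise distinct (E is a set). *)
Definition path_hypergraph (V : finType) (es : seq {set V}) : Prop :=
  [/\ uniq es,
      all (fun e : {set V} => 1 < #|e|) es,
      \bigcup_(e <- es) e = [set: V],
      (forall i, i.+1 < size es ->
         #|nth set0 es i :&: nth set0 es i.+1| = 1) &
      (forall i j, i < size es -> j < size es ->
         (i.+2 <= j) || (j.+2 <= i) ->
         nth set0 es i :&: nth set0 es j = set0)].

Definition vcount (V : finType) (c : V -> A) (a : A) : nat :=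
  #|[set v | c v == a]|.

Definition induced (V : finType) (c : V -> A) (e : {set V}) : A :=
  (\sum_(v in e) c v)%R.

Definition ecount (V : finType) (es : seq {set V}) (c : V -> A) (a : A) : nat :=
  count (fun e : {set V} => induced c e == a) es.

Definition close (x y : nat) : Prop := (x <= y.+1) /\ (y <= x.+1).

Definition friendly (V : finType) (c : V -> A) : Prop :=
  forall a b : A, close (vcount c a) (vcount c b).

Definition cordial (V : finType) (es : seq {set V}) : Prop :=
  exists c : V -> A, friendly c /\
    forall a b : A, close (ecount es c a) (ecount es c b).

(* Main.v *)
Require Import Defs.
From mathcomp Require Import all_boot all_order all_algebra.
Import GRing.Theory.
From mathcomp Require Import zify.
Local Open Scope ring_scope.
Lemma z2cases (a : 'Z_2) : a = 0 \/ a = 1.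
Proof. case: a => [[|[|m]] Hm]; [left|right|by []]; exact/val_inj. Qed.
Lemma z2xx (a : 'Z_2) : a + a = 0.
Proof. by case: (z2cases a) => ->; apply/val_inj. Qed.
Lemma addxx (x : A) : x + x = 0.
Proof. case: x => a b. change ((a + a, b + b) = (0, 0)). by rewrite !z2xx. Qed.
Definition elA : seq A := [:: (0,0); (0,1); (1,0); (1,1)].
Lemma enumA : perm_eq (enum A) elA.
Proof.
apply: uniq_perm; first exact: enum_uniq; first by [].
move=> [a b]; rewrite mem_enum inE.
by case: (z2cases a) => ->; case: (z2cases b) => ->.
Qed.
Lemma bigA (R : Type) (idx : R) (op : Monoid.com_law idx) (F : A -> R) :
  \big[op/idx]_(a : A) F a = op (F (0,0)) (op (F (0,1)) (op (F (1,0)) (op (F (1,1)) idx))).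
Proof. by rewrite -big_enum (perm_big _ enumA) /= !big_cons big_nil. Qed.

Lemma allA (a : A) : a = (0,0) \/ a = (0,1) \/ a = (1,0) \/ a = (1,1).
Proof.
have : a \in elA by rewrite -(perm_mem enumA) mem_enum.
by rewrite !inE => /or4P [] /eqP ->; auto.
Qed.

Lemma cardA : #|A| = 4%N.
Proof. by rewrite cardE (perm_size enumA). Qed.

Lemma sumA0 : (\sum_(a : A) a = 0)%R.
Proof. rewrite bigA. change ((0+(0+(1+(1+0))), 0 + (1 + (0 + (1 + 0)))) = (0,0) :> A)%R.
 by rewrite !addr0 !add0r z2xx. Qed.

Lemma card_vcount (V : finType) (c : V -> A) : #|V| = (\sum_(a : A) vcount c a)%N.
Proof.
rewrite -sum1_card (partition_big c predT) //=.
apply: eq_bigr => a _; rewrite /vcount sum1_card cardsE; apply: eq_card => v.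
by [].
Qed.

Lemma total_vcount (V : finType) (c : V -> A) :
  (\sum_(v : V) c v = \sum_(a : A) a *+ vcount c a)%R.
Proof.
rewrite (partition_big c predT) //=.
apply: eq_bigr => a _.
rewrite (eq_bigr (fun _ => a)); last by move=> v /eqP.
rewrite sumr_const /vcount cardsE; congr (_ *+ _); by apply: eq_card => v.
Qed.

Local Close Scope ring_scope.
Theorem proposition7 (V : finType) (es : seq {set V}) :
  path_hypergraph es -> size es = 3 ->
  #|nth set0 es 1| = 2 -> #|V| %% 4 = 0 ->
  ~ cordial es.
Proof.
case: es => [|e1 [|e2 [|e3 [|]]]] //= [U Hall Hcup Hint Hdisj] _ He2 HV [c [Hf Hc]].
have I12 := Hint 0%N erefl; have I23 := Hint 1%N erefl.
have D13 := Hdisj 0%N 2%N erefl erefl erefl.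
rewrite /= in I12 I23 D13.
have Hsum : #|V| = (vcount c (0,0)%R + vcount c (0,1)%R + vcount c (1,0)%R + vcount c (1,1)%R)%N.
  by rewrite (@card_vcount V c) bigA /= addn0 !addnA.
set n := vcount c (0,0)%R.
have [E1 E2 E3] : [/\ vcount c (0,1)%R = n, vcount c (1,0)%R = n & vcount c (1,1)%R = n].
  have := Hf (0,0)%R (0,1)%R; have := Hf (0,0)%R (1,0)%R; have := Hf (0,0)%R (1,1)%R.
  have := Hf (0,1)%R (1,0)%R; have := Hf (0,1)%R (1,1)%R; have := Hf (1,0)%R (1,1)%R.
  rewrite /close -/n => H1 H2 H3 H4 H5 H6.
  have HV2 := HV; rewrite Hsum in HV2; split; lia.
have Heq : forall a, vcount c a = n.
  move=> a; case: (allA a) => [->|[->|[->|->]]] //.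
have Htot : (\sum_(v : V) c v = 0)%R.
  rewrite (@total_vcount V c) (eq_bigr (fun a => a *+ n)%R); last by move=> a _; rewrite Heq.
  by rewrite sumrMnl sumA0 mul0rn.
have S2 : e2 \subset e1 :|: e3.
  have Hc2 : #|e2 :&: (e1 :|: e3)| = #|e2|.
    have D : (e2 :&: e1) :&: (e2 :&: e3) = set0 by rewrite setIACA setIid D13 setI0.
    by rewrite He2 setIUr cardsU D cards0 subn0 I23 setIC I12.
  have := subset_leqif_cards (subsetIl e2 (e1 :|: e3)).
  move=> [_]; rewrite Hc2 eqxx => /esym H.
  by rewrite -(eqP H) subsetIr.
have HT : e1 :|: e3 = [set: V].
  move: Hcup; rewrite !big_cons big_nil setU0 => <-.
  apply/eqP; rewrite eqEsubset; apply/andP; split.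
    by apply/subsetP => v; rewrite !inE => /orP [] ->; rewrite ?orbT.
  apply/subsetP => v; rewrite !inE => /or3P [] Hv; rewrite ?Hv ?orbT //.
  by move/subsetP: S2 => /(_ v Hv); rewrite inE.
have Hind : induced c e1 = induced c e3.
  have : (induced c e1 + induced c e3 = 0)%R.
    rewrite /induced -bigU /=; last by rewrite -setI_eq0 D13.
    rewrite -[RHS]Htot; apply: eq_bigl => v; by rewrite !inE -in_setU HT in_setT.
  move/eqP; rewrite addr_eq0 => /eqP ->.
  by apply/eqP; rewrite eq_sym -addr_eq0 addxx.
set a := induced c e1; set d := induced c e2.
have : ~~ ([set: A] \subset [set a; d]).
  apply/negP => /subset_leq_card; rewrite cardsT cardA.
  by rewrite cards2; case: (a != d).
case/subsetPn => b _; rewrite !inE negb_or => /andP [Hba Hbd].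
have [H1 _] := Hc a b.
rewrite eq_sym in Hba; rewrite eq_sym in Hbd; move: H1; rewrite /ecount /= -Hind -/a -/d eqxx (negbTE Hba) (negbTE Hbd).
case: (d == a); rewrite /= ?addn0 ?add0n ?addn1 ?addnS // ltnS ltnS ltnn. 
Qed.
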